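(* Let $N\ge1$, $\tilde s\in(0,1)$ and $$\tilde m\in\Big(\frac{N-2+4\tilde s}{N+2\tilde s},\ \frac{N+2\tilde s}{N+2}\Big).$$ Then there is a constant $K=K(N,\tilde s,\tilde m)>0$ such that $$v(x,t)=K\,t^{\frac{1}{1-\tilde m}}\,|x|^{-\frac{2-2\tilde s}{1-\tilde m}},\qquad x\neq 0,\ t>0,$$ is a solution of $$v_t=\nabla\cdot\big(v^{\tilde m-1}\nabla(-\Delta)^{-\tilde s}v\big).$$
   Context: For $0<\sigma<1$, $(-\Delta)^{-\sigma}$ is the inverse fractional Laplacian on $\mathbb{R}^N$ (Fourier symbol $(2\pi|\xi|)^{-2\sigma}$, Riesz potential). On power functions it acts by $$(-\Delta)^{-\sigma}|x|^{-\alpha}=\bar k(\alpha)\,|x|^{-\alpha+2\sigma},$$ where $$\bar k(\alpha)=2^{-2\sigma}\frac{\Gamma\big(\frac{N-\alpha}{2}\big)\,\Gamma\big(\frac{\alpha-2\sigma}{2}\big)}{\Gamma\big(\frac{\alpha}{2}\big)\,\Gamma\big(\frac{N-\alpha+2\sigma}{2}\big)}.$$ This formula is used as the meaning of $(-\Delta)^{-\sigma}|x|^{-\alpha}$ whenever the Gamma factors are finite, including exponents $\alpha>N$. The equation is required to hold pointwise for $x\neq0$, $t>0$. *)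

(* Defs.v *)
From HB Require Import structures.
From mathcomp Require Import all_boot all_order all_algebra.
From mathcomp Require Import all_classical all_reals all_analysis.
Set Implicit Arguments. Unset Strict Implicit. Unset Printing Implicit Defensive.
Import Order.TTheory GRing.Theory Num.Theory.
Import numFieldNormedType.Exports.
Local Open Scope classical_set_scope.
Local Open Scope ring_scope.

Section Defs.
Variable R : realType.

Definition Euler_Gamma (z : R) : R :=
  Rintegral lebesgue_measure `[0, +oo[%classic
    (fun t : R => t `^ (z - 1) * expR (- t)).

Definition Gamma_finite (z : R) : Prop := forall n : nat, z <> - (n%:R).

(* Meromorphic continuation via the functional equation:
   Gamma z = Gamma (z + n) / (z (z+1) ... (z+n-1)) with n = |floor z| + 1,
   so that z + n > 0.  For z > 0 this agrees with Euler's integral. *)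
Definition Gamma (z : R) : R :=
  let n := (`|Num.floor z|%N).+1 in
  Euler_Gamma (z + n%:R) / \prod_(k < n) (z + k%:R).

Definition enorm (N : nat) (x : 'rV[R]_N) : R :=
  Num.sqrt (\sum_(i < N) x ord0 i ^+ 2).

Definition kbar (N : nat) (sigma alpha : R) : R :=
  2 `^ (- (2 * sigma)) *
  (Gamma ((N%:R - alpha) / 2) * Gamma ((alpha - 2 * sigma) / 2)) /
  (Gamma (alpha / 2) * Gamma ((N%:R - alpha + 2 * sigma) / 2)).

Definition kbar_defined (N : nat) (sigma alpha : R) : Prop :=
  [/\ Gamma_finite ((N%:R - alpha) / 2), Gamma_finite ((alpha - 2 * sigma) / 2),
      Gamma_finite (alpha / 2) & Gamma_finite ((N%:R - alpha + 2 * sigma) / 2)].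

Definition power_repr (N : nat) (sigma : R) (f : 'rV[R]_N -> R) (p : R * R) : Prop :=
  kbar_defined N sigma p.2 /\
  forall y : 'rV[R]_N, y != 0 -> f y = p.1 * enorm y `^ (- p.2).

(* The inverse fractional Laplacian (-Delta)^(-sigma), with its meaning on
   (multiples of) power functions given by
   (-Delta)^(-sigma) |x|^(-alpha) = kbar(alpha) |x|^(-alpha + 2 sigma).
   (Default value 0 when f is not of that form; not used below.) *)
Definition inv_frac_lap (N : nat) (sigma : R) (f : 'rV[R]_N -> R) : 'rV[R]_N -> R :=
  let p := xget (0, 0) [set p | power_repr sigma f p] in
  fun x => p.1 * kbar N sigma p.2 * enorm x `^ (- p.2 + 2 * sigma).

Definition evec (N : nat) (i : 'I_N) : 'rV[R]_N := delta_mx ord0 i.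

Definition solves_at (N : nat) (s m : R) (v : 'rV[R]_N -> R -> R)
  (x : 'rV[R]_N) (t : R) : Prop :=
  let u := inv_frac_lap s (fun y => v y t) in
  let flux := fun (i : 'I_N) (y : 'rV[R]_N) => v y t `^ (m - 1) * 'D_(evec i) u y in
  [/\ derivable (v x) t 1,
      (forall i (y : 'rV[R]_N), y != 0 -> derivable u y (evec i)),
      (forall i, derivable (flux i) x (evec i)) &
      'D_1 (v x) t = \sum_(i < N) 'D_(evec i) (flux i) x].

End Defs.

(* Main.v *)
Require Import Defs.
From HB Require Import structures.
From mathcomp Require Import all_boot all_order all_algebra.
From mathcomp Require Import all_classical all_reals all_analysis.
From mathcomp Require Import ring lra measurable_realfun exponential_distribution.
Import Order.TTheory GRing.Theory Num.Theory.
Import numFieldNormedType.Exports.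
Local Open Scope ring_scope.
Set Implicit Arguments. Unset Strict Implicit.

Section S.
Variable R : realType.
Variable N : nat.

Lemma dir_is_derive (f : 'rV[R]_N -> R) x v d :
  is_derive (0:R) 1 (fun h : R => f (h *: v + x)) d -> is_derive x v f d.
Proof.
move=> [H1 H2]; split; first exact/derivable1P.
rewrite -H2 /derive; set g1 := fun h => h^-1 *: _; set g2 := fun h => h^-1 *: _.
suff -> : g1 = g2 by [].
by rewrite funeqE /g1 /g2 => h /=; rewrite addr0 scale0r add0r [_%:A]mulr1.
Qed.

Lemma dir_is_derive' (f : 'rV[R]_N -> R) x v d :
  is_derive x v f d -> is_derive (0:R) 1 (fun h : R => f (h *: v + x)) d.
Proof.
move=> [H1 H2]; split; first exact: (derivable1P f x v).1 H1.
rewrite -H2 /derive; set g1 := fun h => h^-1 *: _; set g2 := fun h => h^-1 *: _.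
suff -> : g1 = g2 by [].
by rewrite funeqE /g1 /g2 => h /=; rewrite addr0 scale0r add0r [_%:A]mulr1.
Qed.

Definition S2 (y : 'rV[R]_N) : R := \sum_(j < N) y ord0 j ^+ 2.

Lemma S2_ge0 y : 0 <= S2 y.
Proof. by apply: sumr_ge0 => j _; exact: sqr_ge0. Qed.

Lemma S2_gt0 y : y != 0 -> 0 < S2 y.
Proof.
move=> y0; rewrite lt_def S2_ge0 andbT; apply/negP => /eqP.
move/eqP; rewrite psumr_eq0 => [/allP H|j _]; last exact: sqr_ge0.
move/eqP: y0; apply; apply/matrixP => a j; rewrite mxE (ord1 a).
by have := H j (mem_index_enum _); rewrite sqrf_eq0 => /eqP.
Qed.

Lemma enorm_pow y p : enorm y `^ p = S2 y `^ (2^-1 * p).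
Proof. by rewrite /enorm powRrM powR12_sqrt // S2_ge0. Qed.

Lemma S2_line (i : 'I_N) (x : 'rV[R]_N) h :
  S2 (h *: (@evec R N i) + x) = S2 x - x ord0 i ^+ 2 + (h + x ord0 i) ^+ 2.
Proof.
rewrite /S2 (bigD1 i) //= [in RHS](bigD1 i) //= !mxE /= eqxx mulr1.
have -> : \sum_(j < N | j != i) (h *: (@evec R N i) + x) ord0 j ^+ 2 =
          \sum_(j < N | j != i) x ord0 j ^+ 2.
  apply: eq_bigr => j ji.
  by rewrite !mxE /= (negbTE ji) mulr0 add0r.
by rewrite [x ord0 i ^+ 2 + _]addrC addrK addrC.
Qed.

Lemma is_derive_S2 (i : 'I_N) x : is_derive x ((@evec R N i)) S2 (2 * x ord0 i).
Proof.
apply: dir_is_derive.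
have -> : (fun h : R => S2 (h *: (@evec R N i) + x)) =
   (fun h => S2 x - x ord0 i ^+ 2 + (h + x ord0 i) ^+ 2).
  by apply/funext => h; rewrite S2_line.
set c := S2 x - _; set a := x ord0 i.
have -> : (fun h : R => c + (h + a) ^+ 2) = horner (c%:P + ('X + a%:P) ^+ 2).
  by apply/funext => h; rewrite !hornerE.
apply: is_derive_eq.
by rewrite derivD derivC add0r deriv_exp derivD derivX derivC addr0 mul1r /= !hornerE /= addr0 mulr_natl mulr2n.
Qed.

Lemma is_derive_npow (r : R) (i : 'I_N) x : x != 0 ->
  is_derive x (@evec R N i) (fun y => enorm y `^ r) (r * enorm x `^ (r - 2) * x ord0 i).
Proof.
move=> x0; apply: dir_is_derive.
have -> : (fun h : R => enorm (h *: (@evec R N i) + x) `^ r) =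
   (@powR R ^~ (2^-1 * r)) \o (fun h => S2 (h *: (@evec R N i) + x)).
  by apply/funext => h; rewrite /= enorm_pow.
have S0 : S2 (0 *: (@evec R N i) + x) = S2 x by rewrite scale0r add0r.
have H1 := dir_is_derive' (is_derive_S2 i x).
have H2 : is_derive ((fun h : R => S2 (h *: (@evec R N i) + x)) 0) 1
   (@powR R ^~ (2^-1 * r)) ((2^-1 * r) * S2 x `^ (2^-1 * r - 1)).
  by rewrite /= S0; apply: is_derive1_powR; exact: S2_gt0.
apply: is_derive_eq (is_derive1_comp H2 H1) _.
rewrite enorm_pow.
have -> : 2^-1 * (r - 2) = 2^-1 * r - 1 :> R by field.
by field.
Qed.

Lemma is_derive_coord (i : 'I_N) x :
  is_derive x (@evec R N i) (fun y : 'rV[R]_N => y ord0 i) 1.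
Proof.
apply: dir_is_derive.
have -> : (fun h : R => (h *: (@evec R N i) + x) ord0 i) = horner ('X + (x ord0 i)%:P).
  by apply/funext => h; rewrite !hornerE !mxE /= eqxx mulr1.
apply: is_derive_eq.
by rewrite derivD derivX derivC addr0 hornerE.
Qed.

Lemma is_derive_flux (D p : R) (i : 'I_N) x : x != 0 ->
  is_derive x (@evec R N i) (fun y => D * enorm y `^ p * y ord0 i)
    (D * (p * enorm x `^ (p - 2) * x ord0 i * x ord0 i + enorm x `^ p)).
Proof.
move=> x0.
have -> : (fun y => D * enorm y `^ p * y ord0 i) =
   (D \*: (fun y => enorm y `^ p)) * (fun y : 'rV[R]_N => y ord0 i).
  by apply/funext => y.
apply: is_derive_eq.
  apply: is_deriveM; first exact: is_deriveZ (is_derive_npow p i x0).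
  exact: is_derive_coord.
rewrite /GRing.scale /= mulr1 -[D *: _]/(D * _); ring.
Qed.

Lemma enorm_sev (j : 'I_N) (h : R) : enorm (h *: (@evec R N j)) = `|h|.
Proof.
change (Num.sqrt (S2 (h *: (@evec R N j))) = `|h|).
have := S2_line j 0 h; rewrite addr0 => ->.
rewrite {1}/S2 big1 => [|k _]; last by rewrite mxE expr0n.
by rewrite !mxE expr0n /= subr0 add0r addr0 sqrtr_sqr.
Qed.

Lemma enorm0 : enorm (0 : 'rV[R]_N) = 0.
Proof.
rewrite /enorm; under eq_bigr do rewrite mxE expr0n /=.
by rewrite big1_eq sqrtr0.
Qed.

Lemma enorm_gt0 (y : 'rV[R]_N) : y != 0 -> 0 < enorm y.
Proof. by move=> y0; rewrite /enorm sqrtr_gt0 S2_gt0. Qed.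

Lemma inv_frac_lapE (j0 : 'I_N) (s P b : R) : P != 0 -> kbar_defined N s b ->
  inv_frac_lap s (fun y : 'rV[R]_N => P * enorm y `^ (- b)) =
  fun y : 'rV[R]_N => P * kbar N s b * enorm y `^ (- b + 2 * s).
Proof.
move=> P0 kb; rewrite /inv_frac_lap (@xget_unique _ _ _ (P, b)) //.
move=> [p1 p2] [_ /= H].
have ne0 (h : R) : h != 0 -> h *: (@evec R N j0) != 0.
  move=> h0; apply/eqP => /matrixP /(_ ord0 j0); rewrite !mxE /= eqxx mulr1.
  by move/eqP: h0.
have := H _ (ne0 1 (oner_neq0 R)); rewrite enorm_sev normr1 !powR1 !mulr1 => e1.
have := H _ (ne0 2 (lt0r_neq0 (ltr0Sn R 1))).
rewrite enorm_sev gtr0_norm // -e1 => /(mulfI P0) /(congr1 (@ln R)).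
rewrite !ln_powR => /(mulIf (lt0r_neq0 (ln_gt0 (ltr1n R 2)))) /eqP.
by rewrite eqr_opp => /eqP ->.
Qed.

Lemma is_derive_Cnpow (C r : R) (i : 'I_N) x : x != 0 ->
  is_derive x (@evec R N i) (fun y => C * enorm y `^ r)
    (C * (r * enorm x `^ (r - 2) * x ord0 i)).
Proof.
move=> x0.
have -> : (fun y => C * enorm y `^ r) = C \*: (fun y : 'rV[R]_N => enorm y `^ r).
  by apply/funext.
exact: is_deriveZ (is_derive_npow r i x0).
Qed.
End S.


Section G.
Local Open Scope classical_set_scope.
Variable R : realType.
Notation mu := (@lebesgue_measure R).

Lemma ln_bound (k t : R) : 0 < k -> 0 < t -> ln t <= ln k + t / k - 1.
Proof.
move=> k0 t0.
have -> : t = (t / k) * k by rewrite divfK // lt0r_neq0.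
rewrite lnM ?posrE ?divr_gt0 // divfK ?lt0r_neq0 //.
have := @le_ln1Dx R (t / k - 1).
rewrite addrCA subrr addr0 => H.
have : ln (t / k) <= t / k - 1.
  apply: H; have : 0 < t / k by rewrite divr_gt0.
  lra.
lra.
Qed.

Lemma g_bound (w t : R) : 1 <= w -> 0 <= t ->
  t `^ (w - 1) * expR (- t) <=
  (expR ((w - 1) * (ln (2 * w) - 1)) + 1) * expR (- (t / 2)).
Proof.
move=> w1; rewrite le0r => /orP[/eqP ->|t0].
  rewrite oppr0 mul0r oppr0 expR0 !mulr1.
  rewrite /powR eqxx; case: (_ == _) => /=.
    by rewrite lerDr ltW // expR_gt0.
  by rewrite addr_ge0 // ltW // expR_gt0.
rewrite /powR (gt_eqF t0) -expRD.
apply: (@le_trans _ _ (expR ((w - 1) * (ln (2 * w) - 1)) * expR (- (t / 2)))); last first.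
  by rewrite ler_wpM2r ?lerDl // ltW // expR_gt0.
rewrite -expRD ler_expR.
have w0 : 0 < 2 * w by lra.
have H := ln_bound w0 t0.
have H2 : (w - 1) * ln t <= (w - 1) * (ln (2 * w) + t / (2 * w) - 1).
  by rewrite ler_wpM2l // subr_ge0.
have H3 : (w - 1) * (t / (2 * w)) <= t / 2.
  rewrite mulrA ler_pdivrMr // mulrC.
  have -> : t / 2 * (2 * w) = t * w by field.
  nra.
have E : (w - 1) * (ln (2 * w) + t / (2 * w) - 1) =
  (w - 1) * (ln (2 * w) - 1) + (w - 1) * (t / (2 * w)) by ring.
rewrite E in H2.
lra.
Qed.

Lemma EG_pos (w : R) : 1 <= w -> 0 < Euler_Gamma w.
Proof.
move=> w1.
pose g := fun t : R => t `^ (w - 1) * expR (- t).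
pose D := `[0, +oo[%classic : set R.
change (0 < fine (\int[mu]_(x in D) (g x)%:E)).
have mD : measurable D by exact: measurable_itv.
have mg : measurable_fun D g.
  apply: measurable_funM; first exact: measurable_funTS (@measurable_powR R (w - 1)).
  apply: measurable_funTS; apply: (measurableT_comp (@measurable_expR R)).
  exact: oppr_measurable.
have g0 t : D t -> 0 <= g t by move=> _; rewrite mulr_ge0 ?powR_ge0 // ltW // expR_gt0.
pose C := expR ((w - 1) * (ln (2 * w) - 1)) + 1.
have C0 : 0 <= C by rewrite addr_ge0 // ltW // expR_gt0.
have mpdf : measurable_fun D (@exponential_pdf R (2^-1)).
  exact: measurable_funTS (measurable_exponential_pdf _).
have f10 : forall x, D x -> (0 <= (g x)%:E)%E by move=> x Dx; rewrite lee_fin g0.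
have mf1 : measurable_fun D (fun x => (g x)%:E) by exact/measurable_EFinP.
have hi : (\int[mu]_(x in D) (g x)%:E <= (2 * C)%:E)%E.
  have mf2 : measurable_fun D (fun x => ((2 * C) * @exponential_pdf R (2^-1) x)%:E).
    by apply/measurable_EFinP; apply: measurable_funM.
  apply: (le_trans (ge0_le_integral mu mD f10 mf1 mf2 _)).
    move=> x Dx; rewrite lee_fin exponential_pdfE; last first.
      by move: Dx; rewrite /D /= in_itv /= andbT.
    have x0 : 0 <= x by move: Dx; rewrite /D /= in_itv /= andbT.
    have := g_bound w1 x0.
    have -> : 2 * C * (2^-1 * expR (- 2^-1 * x)) = C * expR (- (x / 2)).
      by rewrite mulNr (mulrC 2^-1 x); field.
    by [].
  have pdf0 : forall x, setT x -> (0 <= (@exponential_pdf R (2^-1) x)%:E)%E.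
    move=> y _; rewrite lee_fin; exact: exponential_pdf_ge0.
  have mpdfT : measurable_fun setT (fun x => (@exponential_pdf R (2^-1) x)%:E).
    apply/measurable_EFinP; exact: measurable_exponential_pdf.
  under eq_integral => y _ do rewrite EFinM.
  rewrite ge0_integralZl_EFin //; last first.
    - by rewrite mulr_ge0.
    - exact: measurable_funTS mpdfT.
    - by move=> x _; exact: pdf0.
  rewrite -[X in (_ <= X)%E]mule1; apply: lee_wpmul2l; first by rewrite lee_fin mulr_ge0.
  rewrite -(@integral_exponential_pdf R (2^-1)); last by rewrite invr_gt0.
  exact: (ge0_subset_integral mu mD measurableT mpdfT pdf0).
have lo : ((expR (-2))%:E <= \int[mu]_(x in D) (g x)%:E)%E.
  pose I12 := (`[1, 2]%classic : set R).
  have m12 : measurable I12 by exact: measurable_itv.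
  have sub : I12 `<=` D.
    move=> x; rewrite /I12 /D /= !in_itv /= andbT => /andP[x1 _].
    exact: le_trans x1.
  apply: (le_trans _ (ge0_subset_integral mu m12 mD mf1 f10 sub)).
  have step : (\int[mu]_(x in I12) (cst (expR (-2))%:E x) = (expR (-2))%:E)%E.
    have H12 : mu I12 = 1%E.
      by rewrite /I12 lebesgue_measure_itv /= lte_fin ltr1n -EFinD /= (_ : 2 - 1 = 1 :> R) //; lra.
    rewrite integral_cst // -[RHS]mule1; congr (_ * _)%E; exact: H12.
  rewrite -step.
  apply: (ge0_le_integral mu m12).
  - by move=> x _; rewrite lee_fin ltW // expR_gt0.
  - exact: measurable_cst.
  - exact: measurable_funS mD sub mf1.
  move=> x; rewrite /I12 /= !in_itv /= => /andP[x1 x2].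
  rewrite lee_fin -[X in X <= _]mul1r; apply: ler_pM.
  - by [].
  - exact/ltW/expR_gt0.
  - by rewrite -[X in X <= _](powRr0 x); apply: ler_powR => //; rewrite subr_ge0.
  - by rewrite ler_expR lerN2.
apply: (@fine_gt0 R); apply/andP; split.
  by apply: lt_le_trans lo; rewrite lte_fin expR_gt0.
by apply: le_lt_trans hi _; rewrite ltry.
Qed.

Lemma Gamma_pos (z : R) : 0 < z -> 0 < Gamma z.
Proof.
move=> z0; rewrite /Gamma; set n := (`|Num.floor z|%N).+1.
apply: divr_gt0.
  apply: EG_pos; have : 1 <= n%:R :> R by rewrite ler1n.
  lra.
apply: prodr_gt0 => k _; apply: ltr_wpDr => //.
Qed.

Lemma Gamma_neg (z : R) : -1 < z < 0 -> Gamma z < 0.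
Proof.
move=> /andP[z1 z0]; rewrite /Gamma.
have -> : Num.floor z = -1.
  by apply: floor_def; rewrite /= z0 andbT; apply: ltW; rewrite -[(-1)%:~R]/(-1 : R).
rewrite /= !big_ord_recl big_ord0 /= mulr1.
rewrite addr0 /bump /= add1n.
have E : 0 < Euler_Gamma (z + 2) by apply: EG_pos; lra.
have P : 0 < - (z * (z + 1%:R)) by rewrite -mulNr mulr_gt0 //; lra.
rewrite -oppr_gt0 -mulrN -invrN; exact: divr_gt0.
Qed.

Lemma fin_pos (z : R) : 0 < z -> Gamma_finite z.
Proof.
move=> z0 n E; have : 0 <= n%:R :> R by [].
lra.
Qed.

Lemma fin_neg (z : R) : -1 < z < 0 -> Gamma_finite z.
Proof.
move=> /andP[z1 z0] [|n] E; first by move: z0; rewrite E oppr0 ltxx.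
have : 1 <= n.+1%:R :> R by rewrite ler1n.
lra.
Qed.

Lemma kbar_ok (N : nat) (s b : R) : 0 < s < 1 ->
  N%:R + 2 * s < b < N%:R + 2 ->
  kbar_defined N s b /\ 0 < kbar N s b.
Proof.
move=> /andP[s0 s1] /andP[b1 b2].
have N0 : 0 <= N%:R :> R by [].
have h1 : -1 < (N%:R - b) / 2 < 0 by apply/andP; split; lra.
have h2 : 0 < (b - 2 * s) / 2 by lra.
have h3 : 0 < b / 2 by lra.
have h4 : -1 < (N%:R - b + 2 * s) / 2 < 0 by apply/andP; split; lra.
split; first by split; [exact: fin_neg | exact: fin_pos | exact: fin_pos | exact: fin_neg].
rewrite /kbar -mulrA; apply: mulr_gt0; first exact: powR_gt0.
have g1 := Gamma_neg h1; have g2 := Gamma_pos h2.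
have g3 := Gamma_pos h3; have g4 := Gamma_neg h4.
rewrite -mulrNN -invrN; apply: divr_gt0.
  by rewrite -mulNr mulr_gt0 // oppr_gt0.
by rewrite -mulrN mulr_gt0 // oppr_gt0.
Qed.
End G.

Unset Implicit Arguments.

Theorem theorem6p1 (R : realType) (N : nat) (s m : R) :
  (1 <= N)%N -> 0 < s < 1 ->
  (N%:R - 2 + 4 * s) / (N%:R + 2 * s) < m < (N%:R + 2 * s) / (N%:R + 2) ->
  exists K : R, 0 < K /\
    let v := fun (x : 'rV[R]_N) (t : R) =>
      K * t `^ (1 / (1 - m)) * enorm x `^ (- ((2 - 2 * s) / (1 - m))) in
    forall (x : 'rV[R]_N) (t : R), x != 0 -> 0 < t -> solves_at s m v x t.
Proof.
move=> N1 /andP[s0 s1] /andP[mlo mhi].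
have N0 : 0 <= N%:R :> R by [].
have NS : 0 < N%:R + 2 * s by lra.
have N2 : 0 < N%:R + 2 :> R by lra.
rewrite ltr_pdivrMr // in mlo.
rewrite ltr_pdivlMr // in mhi.
have m1 : 0 < 1 - m by nra.
set a := 1 / (1 - m); set b := (2 - 2 * s) / (1 - m).
have hb : N%:R + 2 * s < b < N%:R + 2.
  apply/andP; split; rewrite /b.
    by rewrite ltr_pdivlMr //; nra.
  by rewrite ltr_pdivrMr //; nra.
have [kdef kpos] := kbar_ok (N := N) (s := s) (b := b) (introT andP (conj s0 s1)) hb.
set c := kbar N s b.
have c0 : 0 < c := kpos.
have a0 : 0 < a by rewrite /a divr_gt0.
have bs : 0 < b - 2 * s by lra.
have bN : 0 < b - N%:R by lra.
set Z := c * (b - 2 * s) * (b - N%:R) / a.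
have Z0 : 0 < Z.
  by rewrite /Z; apply: divr_gt0 => //; apply: mulr_gt0 => //; apply: mulr_gt0.
exists (Z `^ a); split; first exact: powR_gt0.
move=> v x t x0 t0.
set K := Z `^ a.
set P := K * t `^ a.
have K0 : 0 < K by exact: powR_gt0.
have P0 : 0 < P by rewrite mulr_gt0 // powR_gt0.
have j0 : 'I_N := Ordinal N1.
rewrite /solves_at /=.
have -> : inv_frac_lap s (v^~ t) = fun y : 'rV[R]_N => P * c * enorm y `^ (- b + 2 * s).
  exact: (inv_frac_lapE j0 (lt0r_neq0 P0) kdef).
set r := - b + 2 * s.
set D := P `^ (m - 1) * (P * c) * r.
have Eexp : - b * (m - 1) + (r - 2) = - b by rewrite /r /b; field; lra.
have Hf : forall i : 'I_N,
   (fun y : 'rV[R]_N => v y t `^ (m - 1) *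
     'D_(@evec R N i) (fun y0 : 'rV[R]_N => P * c * enorm y0 `^ r) y) =
   (fun y => D * enorm y `^ (- b) * y ord0 i).
  move=> i; apply/funext => y.
  have [->|y0] := eqVneq y 0.
    rewrite /v enorm0 powR0 ?mulr0; last by rewrite oppr_eq0 lt0r_neq0 //; lra.
    rewrite powR0 ?mul0r ?mxE ?mulr0 //; lra.
  have [_ ->] := is_derive_Cnpow (P * c) r i y0.
  have ny := enorm_gt0 y0.
  rewrite /v -/K -/P powRM ?(ltW P0) ?powR_ge0 // -powRrM.
  have Hpow : enorm y `^ (- b * (m - 1)) * enorm y `^ (r - 2) = enorm y `^ (- b).
    rewrite -powRD ?Eexp //; apply/implyP => _; exact: lt0r_neq0.
  rewrite -Hpow /D; ring.
set E := enorm x `^ (- b).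
have Hv : is_derive t 1 (v x) (K * E * (a * t `^ (a - 1))).
  have -> : v x = (K * E) \*: (@powR R ^~ a).
    by apply/funext => t'; rewrite /v -/K -/E mulrAC.
  apply: (is_derive_eq (is_deriveZ (K * E) (is_derive1_powR a t0))).
  by [].
have Dfl : forall i : 'I_N,
   'D_(@evec R N i) (fun y : 'rV[R]_N => D * enorm y `^ (- b) * y ord0 i) x =
   D * (- b * enorm x `^ (- b - 2) * x ord0 i * x ord0 i + E).
  by move=> i; have [_ ->] := is_derive_flux D (- b) i x0.
split.
- by case: Hv.
- by move=> i y y0; case: (is_derive_Cnpow (P * c) r i y0).
- by move=> i; rewrite Hf; case: (is_derive_flux D (- b) i x0).
case: Hv => _ ->.
under eq_bigr => i _ do rewrite Hf Dfl.
rewrite -mulr_sumr big_split /= sumr_const card_ord.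
under eq_bigr => i _ do rewrite -mulrA -expr2.
rewrite -mulr_sumr -/(S2 x).
have nx := enorm_gt0 x0.
have HS : S2 x = enorm x `^ 2.
  by rewrite enorm_pow mulVf ?powRr1 ?S2_ge0.
have HA : enorm x `^ (- b - 2) * enorm x `^ 2 = E.
  by rewrite -powRD ?subrK //; apply/implyP => _; exact: lt0r_neq0.
rewrite HS -(mulrA (- b)) HA.
have am : a * (m - 1) = -1 by rewrite /a; field; lra.
have Pm : P `^ (m - 1) = Z^-1 * t^-1.
  rewrite /P powRM ?(ltW K0) ?powR_ge0 // /K -!powRrM am.
  by rewrite !powR_inv1 ?(ltW Z0) ?(ltW t0).
have Ta : t `^ (a - 1) = t `^ a / t.
  by rewrite powRB ?powRr1 ?(ltW t0) //; apply/implyP => _; exact: lt0r_neq0.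
rewrite /D Pm Ta /P /r /Z -mulr_natr.
field.
apply/and5P; split; exact: lt0r_neq0.
Qed.
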